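(* Let $a,b\in[0,T]$, let $F=F_{a\to b}$ and let $x^*$ be a fixed point of $F$, with all objects and constants ($f^u_{a\to b},f^c_{a\to b},\Gamma_{a,b}(L),C,r,B$) as in the context, and assume the Smooth ODE and Contraction/Fixed-Point assumptions of the context hold. Let $x\in\mathbb{R}^d$ with $\|x\|\le B$ and $\|x^*\|\le B$. Then for every integer $k\ge 0$, $$\|f^c_{a\to b}(F^{k}(x))-f^u_{a\to b}(F^{k}(x))\|\le 2C\,\Gamma_{a,b}(L)\,r^k\|x-x^*\|\le 4C\,\Gamma_{a,b}(L)\,r^kB,$$ where $F^k$ is the $k$-fold composition of $F$.
   Context: $\|\cdot\|$ is the Euclidean norm on $\mathbb{R}^d$, $T>0$. Let $\bar{\alpha}:[0,T]\to(0,1)$ be a smooth, strictly decreasing noise schedule, and set $\lambda_{t}:=\sqrt{\bar{\alpha}_t}\,\frac{d}{dt}\big(\sqrt{(1-\bar{\alpha}_t)/\bar{\alpha}_t}\big)$, $\mu_{t}:=-\sqrt{\bar{\alpha}_t}\,\frac{d}{dt}\big(1/\sqrt{\bar{\alpha}_t}\big)$. Let $\varepsilon^u,\varepsilon^c:\mathbb{R}^d\times[0,T]\to\mathbb{R}^d$ be noise predictors and $f^u_{a\to b}(x)$ (resp. $f^c_{a\to b}(x)$) the value at time $b$ of the solution of $\frac{dx_t}{dt}=\mu_t x_t+\lambda_t\varepsilon^u(x_t,t)$ (resp. with $\varepsilon^c$) with $x_a=x$. $L>0$ is a Lipschitz constant of $\varepsilon^u(\cdot,t),\varepsilon^c(\cdot,t)$,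 $\Gamma_{a,b}(L):=(|\lambda_a|L+|\mu_a|)|b-a|+1$, and $B>0$. (Smooth ODE) There is $C>1$ with $\|f^{u}_{a\to b}(x)-f^{u}_{a\to b}(y)\|\le C\Gamma_{a,b}(L)\|x-y\|$ and $\|f^{c}_{a\to b}(x)-f^{c}_{a\to b}(y)\|\le C\Gamma_{a,b}(L)\|x-y\|$ for all $x,y$. (Contraction/Fixed Point) There is $r\in(0,1)$ and an operator $F_{a\to b}:\mathbb{R}^d\to\mathbb{R}^d$ with a fixed point $x^*$, whose fixed points are exactly the $x$ with $f^c_{a\to b}(x)=f^u_{a\to b}(x)$, and with $\|F_{a\to b}(x)-F_{a\to b}(y)\|\le r\|x-y\|$ for all $x,y$. *)

(* Defs.v *)
From HB Require Import structures.
From mathcomp Require Import all_boot all_order all_algebra.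
From mathcomp Require Import all_classical all_reals all_analysis.
Set Implicit Arguments. Unset Strict Implicit. Unset Printing Implicit Defensive.
Import Order.TTheory GRing.Theory Num.Theory.
Import numFieldNormedType.Exports.
Local Open Scope ring_scope.
Local Open Scope classical_set_scope.

Definition enorm {R : realType} {d : nat} (v : 'rV[R]_d) : R :=
  Num.sqrt (\sum_(i < d) (v ord0 i) ^+ 2).

Definition lam {R : realType} (abar : R -> R) (t : R) : R :=
  Num.sqrt (abar t) * derive1 (fun s => Num.sqrt ((1 - abar s) / abar s)) t.

Definition mu {R : realType} (abar : R -> R) (t : R) : R :=
  - (Num.sqrt (abar t) * derive1 (fun s => 1 / Num.sqrt (abar s)) t).

Definition Gamma {R : realType} (abar : R -> R) (a b L : R) : R :=
  (`|lam abar a| * L + `|mu abar a|) * `|b - a| + 1.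

Definition noise_schedule {R : realType} (T : R) (abar : R -> R) : Prop :=
  (forall n (t : R), derivable (derive1n n abar) t 1) /\
  (forall t, t \in `[0, T] -> 0 < abar t < 1) /\
  (forall s t, s \in `[0, T] -> t \in `[0, T] -> s < t -> abar t < abar s).

Definition is_flow_map {R : realType} {d : nat} (abar : R -> R)
  (eps : 'rV[R]_d -> R -> 'rV[R]_d) (a b : R) (f : 'rV[R]_d -> 'rV[R]_d) : Prop :=
  forall x : 'rV[R]_d, exists phi : R -> 'rV[R]_d,
    phi a = x /\ phi b = f x /\
    forall t, t \in `[Order.min a b, Order.max a b] ->
      is_derive t (1 : R) phi (mu abar t *: phi t + lam abar t *: eps (phi t) t).

(* Main.v *)
Require Import Defs.
From HB Require Import structures.
From mathcomp Require Import all_boot all_order all_algebra.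
From mathcomp Require Import all_classical all_reals all_analysis.
From mathcomp Require Import ring lra.
Import Order.TTheory GRing.Theory Num.Theory.
Import numFieldNormedType.Exports.
Local Open Scope ring_scope.
Local Open Scope classical_set_scope.



Lemma dbl (R : realType) (d : nat) (u v : 'I_d -> R) :
  (\sum_i u i) * (\sum_j v j) = \sum_i \sum_j (u i * v j).
Proof. rewrite mulr_suml; apply: eq_bigr => i _; by rewrite mulr_sumr. Qed.

Lemma cs (R : realType) (d : nat) (u v : 'I_d -> R) :
  (\sum_i u i * v i) ^+ 2 <= (\sum_i u i ^+ 2) * (\sum_i v i ^+ 2).
Proof.
have H : 0 <= \sum_i \sum_j (u i * v j - u j * v i) ^+ 2.
  by apply: sumr_ge0 => i _; apply: sumr_ge0 => j _; exact: sqr_ge0.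
have E : \sum_i \sum_j (u i * v j - u j * v i) ^+ 2 =
   \sum_i \sum_j (u i ^+ 2 * v j ^+ 2) + \sum_i \sum_j (u j ^+ 2 * v i ^+ 2)
   - 2 * \sum_i \sum_j ((u i * v i) * (u j * v j)).
  rewrite -big_split /= mulr_sumr -sumrB; apply: eq_bigr => i _.
  rewrite -big_split /= mulr_sumr -sumrB; apply: eq_bigr => j _.
  ring.
have E2 : \sum_i \sum_j (u j ^+ 2 * v i ^+ 2) = \sum_i \sum_j (u i ^+ 2 * v j ^+ 2).
  rewrite exchange_big /=; apply: eq_bigr => i _; apply: eq_bigr => j _; ring.
rewrite E E2 -!dbl in H.
rewrite expr2; lra.
Qed.


Lemma enorm_ge0 {R : realType} {d : nat} (v : 'rV[R]_d) : 0 <= enorm v.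
Proof. exact: sqrtr_ge0. Qed.

Lemma enormN {R : realType} {d : nat} (v : 'rV[R]_d) : enorm (- v) = enorm v.
Proof. rewrite /enorm; congr Num.sqrt; apply: eq_bigr => i _; rewrite mxE; ring. Qed.

Lemma enormD {R : realType} {d : nat} (u v : 'rV[R]_d) : enorm (u + v) <= enorm u + enorm v.
Proof.
rewrite /enorm.
set A := \sum_i u ord0 i ^+ 2. set B := \sum_i v ord0 i ^+ 2.
set Cc := \sum_i u ord0 i * v ord0 i.
have A0 : 0 <= A by apply: sumr_ge0 => i _; exact: sqr_ge0.
have B0 : 0 <= B by apply: sumr_ge0 => i _; exact: sqr_ge0.
have -> : \sum_i (u + v) ord0 i ^+ 2 = A + B + 2 * Cc.
  rewrite /A /B /Cc mulr_sumr -!big_split /=; apply: eq_bigr => i _; rewrite mxE; ring.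
have hC : Cc <= Num.sqrt A * Num.sqrt B.
  rewrite -sqrtrM //.
  apply: (le_trans (ler_norm Cc)).
  rewrite -sqrtr_sqr; apply: ler_wsqrtr. exact: cs.
rewrite -(ger0_norm (addr_ge0 (sqrtr_ge0 A) (sqrtr_ge0 B))) -sqrtr_sqr.
apply: ler_wsqrtr.
have a2 : Num.sqrt A ^+ 2 = A by rewrite sqr_sqrtr.
have b2 : Num.sqrt B ^+ 2 = B by rewrite sqr_sqrtr.
rewrite sqrrD a2 b2; lra.
Qed.


Theorem lemma1 (R : realType) (d : nat) (T : R) (abar : R -> R)
  (epsu epsc : 'rV[R]_d -> R -> 'rV[R]_d) (L C r B a b : R)
  (fu fc F : 'rV[R]_d -> 'rV[R]_d) (xstar x : 'rV[R]_d) :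
  0 < T -> noise_schedule T abar ->
  0 < L ->
  (forall t y z, enorm (epsu y t - epsu z t) <= L * enorm (y - z)) ->
  (forall t y z, enorm (epsc y t - epsc z t) <= L * enorm (y - z)) ->
  0 < B ->
  a \in `[0, T] -> b \in `[0, T] ->
  is_flow_map abar epsu a b fu -> is_flow_map abar epsc a b fc ->
  (* Smooth ODE assumption *)
  1 < C ->
  (forall y z, enorm (fu y - fu z) <= C * Gamma abar a b L * enorm (y - z)) ->
  (forall y z, enorm (fc y - fc z) <= C * Gamma abar a b L * enorm (y - z)) ->
  (* Contraction / fixed point assumption *)
  0 < r < 1 ->
  (forall y, F y = y <-> fc y = fu y) ->
  (forall y z, enorm (F y - F z) <= r * enorm (y - z)) ->
  F xstar = xstar ->
  enorm x <= B -> enorm xstar <= B ->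
  forall k : nat,
    enorm (fc (iter k F x) - fu (iter k F x))
      <= 2 * C * Gamma abar a b L * r ^+ k * enorm (x - xstar)
    /\ 2 * C * Gamma abar a b L * r ^+ k * enorm (x - xstar)
      <= 4 * C * Gamma abar a b L * r ^+ k * B.
Proof.
move=> _ _ L0 _ _ _ _ _ _ _ C1 Lu Lc /andP[r0 r1] Fix Fc Fx xB xsB k.
have G1 : 1 <= Gamma abar a b L.
  rewrite /Gamma lerDr; apply: mulr_ge0; last exact: normr_ge0.
  apply: addr_ge0; last exact: normr_ge0.
  apply: mulr_ge0; [exact: normr_ge0 | exact: ltW].
set G := Gamma abar a b L in G1 *.
have CG0 : 0 <= C * G by apply: mulr_ge0; lra.
have rk0 : 0 <= r ^+ k by apply: exprn_ge0; lra.
have fx : fc xstar = fu xstar by apply: (proj1 (Fix xstar)).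
have Hk : enorm (iter k F x - xstar) <= r ^+ k * enorm (x - xstar).
  elim: k {rk0} => [|k IH]; first by rewrite expr0 mul1r.
  rewrite iterS -{1}Fx exprS -mulrA.
  apply: (le_trans (Fc _ _)); apply: ler_wpM2l; [lra | exact: IH].
set y := iter k F x in Hk *.
have e0 := enorm_ge0 (x - xstar : 'rV[R]_d).
split.
  have -> : fc y - fu y = (fc y - fc xstar) + (fu xstar - fu y).
    by rewrite fx; rewrite addrA subrK.
  apply: (le_trans (enormD _ _)).
  have h1 := Lc y xstar. have h2 := Lu y xstar.
  rewrite -/G in h1 h2.
  rewrite -(opprB (fu y)) enormN.
  have h3 : C * G * enorm (y - xstar) <= C * G * (r ^+ k * enorm (x - xstar)).
    exact: ler_wpM2l.
  have -> : 2 * C * G * r ^+ k * enorm (x - xstar) = 2 * (C * G * (r ^+ k * enorm (x - xstar))) by ring.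
  lra.
have hx : enorm (x - xstar) <= 2 * B.
  apply: (le_trans (enormD _ _)); rewrite enormN; lra.
have -> : 4 * C * G * r ^+ k * B = C * G * r ^+ k * (2 * (2 * B)) by ring.
have -> : 2 * C * G * r ^+ k * enorm (x - xstar) = C * G * r ^+ k * (2 * enorm (x - xstar)) by ring.
apply: ler_wpM2l; first exact: mulr_ge0.
lra.
Qed.
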